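(* Let $F$ be a Ferrers diagram and $G=G(F)$. For $c,c'\in\mathsf{Rec}^{\mathsf{min}}(G)$ we have $\mathsf{CanonTop}(c)=\mathsf{CanonTop}(c')$ if and only if $c=c'$.
   Context: Ferrers diagrams and graphs: a Ferrers diagram $F$ (English convention) of semiperimeter $n+1$ has rows and columns labeled by $0,\ldots,n$: the $n+1$ unit steps of its south-east boundary path, traversed from top-right to bottom-left, are labeled $0,1,\ldots,n$; a vertical step labels the row it bounds, a horizontal step the column it bounds (top row labeled $0$). $\mathsf{rows}(F)$, $\mathsf{cols}(F)$ are the row/column label sets; they partition $\{0,\ldots,n\}$, and $F$ has a cell in row $i$, column $j$ iff $i<j$. $G(F)$ has vertex set $\{0,\ldots,n\}$ with an edge between $i\in\mathsf{rows}(F)$ and $j\in\mathsf{cols}(F)$ iff $i<j$. Sandpile model with sink $0$: configurations $c\in\mathbb{N}^n$; non-sink $v$ unstable if $c_v\ge \deg(v)$; toppling $v$ sends one grain to each neighbour (grains sent to $0$ disappear); toppling the sink adds a grain to each of its neighbours. Recurrent configurations: stable configurations obtainable from the maximal stable configuration ($c_v=\deg(v)-1$) by adding grains and stabilizing; $\mathsf{Rec}(G)$ is their set and $\mathsf{Rec}^{\mathsf{min}}(G)$ the set of recurrent configurations with minimal total number of grains. Canonical toppling: for $c\in\mathsf{Rec}(G(F))$, starting from $c$ topple the sink ($U^{(0)}_c=\{0\}$), then alternately topple simultaneously all unstable vertices in $\mathsf{cols}(F)$ ($V^{(1)}_c$), all unstable vertices in $\mathsf{rows}(F)$ ($U^{(1)}_c$),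 all unstable in $\mathsf{cols}(F)$ ($V^{(2)}_c$), etc.; each vertex topples exactly once, and $\mathsf{CanonTop}(c)=(U^{(0)}_c,V^{(1)}_c,U^{(1)}_c,\ldots)$ is the resulting ordered set partition of $\{0,\ldots,n\}$. *)

(* Defs.v *)
From mathcomp Require Import all_boot.
Set Implicit Arguments. Unset Strict Implicit. Unset Printing Implicit Defensive.

Section Sandpile.
Variables (V : finType) (e : rel V) (s : V).

(* configurations: one value per vertex; the sink value is kept at 0 *)
Definition cfg := {ffun V -> nat}.

Definition deg (v : V) : nat := #|[set u | e v u]|.

Definition stable (c : cfg) : Prop := forall v, v != s -> c v < deg v.

Definition unstable (c : cfg) (v : V) : bool := (v != s) && (deg v <= c v).

(* simultaneous toppling of all vertices of U (each once); grains sent to the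
   sink disappear; toppling the sink adds one grain to each neighbour *)
Definition topple_set (U : {set V}) (c : cfg) : cfg :=
  [ffun u => if u == s then 0
             else (c u - (if u \in U then deg u else 0))
                  + #|[set v in U | e v u]|].

Definition add_grain (v : V) (c : cfg) : cfg :=
  [ffun u => c u + (u == v)].

Definition cmax : cfg := [ffun v => if v == s then 0 else (deg v).-1].

Inductive reach : cfg -> cfg -> Prop :=
| reach_refl c : reach c c
| reach_add c d v : v != s -> reach (add_grain v c) d -> reach c d
| reach_top c d v : unstable c v -> reach (topple_set [set v] c) d -> reach c d.

Definition recurrent (c : cfg) : Prop := stable c /\ reach cmax c.

Definition total (c : cfg) : nat := \sum_(v : V) c v.

Definition rec_min (c : cfg) : Prop :=
  recurrent c /\ forall d, recurrent d -> total c <= total d.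

(* Canonical toppling: block 0 = {sink}; block k (k odd) = unstable vertices
   in cols; block k (k even, k > 0) = unstable vertices in the complement
   (rows); each block is toppled simultaneously. *)
Fixpoint canon_aux (cols : {set V}) (c : cfg) (k : nat) : {set V} * cfg :=
  match k with
  | 0 => ([set s], topple_set [set s] c)
  | k'.+1 =>
      let cf := (canon_aux cols c k').2 in
      let side := if odd k then cols else ~: cols in
      let U := [set v in side | unstable cf v] in
      (U, topple_set U cf)
  end.

(* CanonTop c as the sequence of its blocks (U^(0), V^(1), U^(1), V^(2), ...) *)
Definition canon_top (cols : {set V}) (c : cfg) (k : nat) : {set V} :=
  (canon_aux cols c k).1.

End Sandpile.

(* A Ferrers diagram of semiperimeter n+1 is given by its set R of row labels
   in {0,..,n} (cols = complement); top row 0 is a row and n is a column. *)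
Definition is_ferrers (n : nat) (R : {set 'I_n.+1}) : Prop :=
  ord0 \in R /\ (ord_max : 'I_n.+1) \notin R.

Definition ferrers_rel (n : nat) (R : {set 'I_n.+1}) : rel 'I_n.+1 :=
  fun i j => ((i \in R) && (j \notin R) && (i < j))
          || ((j \in R) && (i \notin R) && (j < i)).

(* Main.v *)
Require Import Defs.
From mathcomp Require Import all_boot.
From mathcomp Require Import zify.
Set Implicit Arguments. Unset Strict Implicit. Unset Printing Implicit Defensive.

Section Gen.
Variables (V : finType) (e : rel V) (s : V) (R : {set V}) (m : V).
Hypothesis esym : symmetric e.
Hypothesis eirr : irreflexive e.
Hypothesis bip : forall u w, e u w -> (u \in R) = (w \notin R).
Hypothesis sR : s \in R.
Hypothesis sadj : forall u, u != s -> e s u = (u \notin R).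
Hypothesis mcol : m \notin R.
Hypothesis madj : forall u, u \in R -> e u m.

Lemma toppleE U (x : cfg V) u : topple_set e s U x u =
  if u == s then 0 else x u - (if u \in U then deg e u else 0) + #|[set v in U | e v u]|.
Proof. by rewrite ffunE. Qed.

Lemma card_nb1 v u : #|[set w in [set v] | e w u]| = e v u.
Proof.
case: (boolP (e v u)) => h.
  have -> : [set w in [set v] | e w u] = [set v].
    by apply/setP => w; rewrite !inE; case: eqP => [->|_] //=; rewrite h.
  by rewrite cards1.
have -> : [set w in [set v] | e w u] = set0.
  by apply/setP => w; rewrite !inE; case: eqP => [->|_] //=; rewrite (negbTE h).
by rewrite cards0.
Qed.

Lemma nb_le_deg (A : {set V}) u : #|[set w in A | e w u]| <= deg e u.
Proof.
apply: subset_leq_card; apply/subsetP => w; rewrite !inE => /andP[_].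
by rewrite esym.
Qed.

Fixpoint tops (P : seq V) (x : cfg V) : cfg V :=
  if P is v :: P' then tops P' (topple_set e s [set v] x) else x.

Definition legalP (P : seq V) (x : cfg V) := forall P1 v P2, P = P1 ++ v :: P2 ->
  deg e v <= x v + count (fun w => e w v) P1.

Lemma legal_cons v P (x : cfg V) : uniq (v :: P) -> s \notin v :: P -> legalP (v :: P) x ->
  unstable e s x v /\ legalP P (topple_set e s [set v] x).
Proof.
move=> /andP[vP uP]; rewrite in_cons negb_or => /andP[sv sP] L; split.
  rewrite /unstable eq_sym sv /=. by have := L [::] v P erefl; rewrite addn0.
move=> P1 w P2 E.
have wP : w \in P by rewrite E mem_cat in_cons eqxx orbT.
have ws : w != s by apply: contraNneq sP => <-.
have wv : w != v by apply: contraNneq vP => <-.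
have H1 : v :: P = (v :: P1) ++ w :: P2 by rewrite E.
have := L _ _ _ H1.
by rewrite toppleE (negbTE ws) in_set1 (negbTE wv) subn0 card_nb1 /= addnA.
Qed.

Lemma tops_reach P (x : cfg V) : uniq P -> s \notin P -> legalP P x -> reach e s x (tops P x).
Proof.
elim: P x => [|v P IH] x UP sP L /=; first exact: reach_refl.
have [Hu HL] := legal_cons UP sP L.
apply: (reach_top Hu); apply: IH => //.
- by case/andP: UP.
- by move: sP; rewrite in_cons negb_or => /andP[].
Qed.

Lemma tops_sink P (x : cfg V) : x s = 0 -> tops P x s = 0.
Proof. elim: P x => [|v P IH] x //= _; apply: IH; by rewrite toppleE eqxx. Qed.

Lemma tops_val P (x : cfg V) : uniq P -> s \notin P -> legalP P x -> forall u, u != s ->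
  tops P x u + (u \in P) * deg e u = x u + count (fun w => e w u) P.
Proof.
elim: P x => [|v P IH] x UP sP L u us /=; first by rewrite mul0n !addn0.
have [/andP[_ Hu] HL] := legal_cons UP sP L.
have /andP[vP uP] := UP.
have sP' : s \notin P by move: sP; rewrite in_cons negb_or => /andP[].
have := IH _ uP sP' HL u us.
rewrite toppleE (negbTE us) in_set1 card_nb1 in_cons.
case: (eqVneq u v) => [->|uv] /=.
  rewrite (negbTE vP) eirr /= mul0n !addn0 mul1n => E. lia.
case: (u \in P); case: (e v u); rewrite /= ?mul1n ?mul0n => E; lia.
Qed.

Lemma reach_trans (a b c : cfg V) : reach e s a b -> reach e s b c -> reach e s a c.
Proof.
move=> H; elim: H c => {a b} [a|a b v vs _ IH|a b v vu _ IH] c H.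
- exact: H.
- exact: reach_add vs (IH _ H).
- exact: reach_top vu (IH _ H).
Qed.

Lemma reach_addf (x y : cfg V) : y s = 0 -> reach e s x [ffun u => x u + y u].
Proof.
move: {2}(\sum_u y u) (erefl (\sum_u y u)) => k.
elim: k y => [|k IH] y Hk ys.
  have -> : [ffun u => x u + y u] = x.
    apply/ffunP => u; rewrite ffunE.
    have : y u <= \sum_u y u by rewrite (bigD1 u) //= leq_addr.
    by rewrite Hk leqn0 => /eqP ->; rewrite addn0.
  exact: reach_refl.
case: (pickP (fun v => 0 < y v)) => [v yv|H]; last first.
  move: Hk; rewrite big1 // => i _; have := H i; rewrite /= lt0n => /negbFE/eqP.
  done.
have vs : v != s by apply: contraTneq yv => ->; rewrite ys.
pose y' : cfg V := [ffun u => y u - (u == v)].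
have Hk' : \sum_u y' u = k.
  rewrite (bigD1 v) //= ffunE eqxx.
  rewrite (eq_bigr y) => [|i /= iv]; last by rewrite ffunE (negbTE iv) subn0.
  move: Hk; rewrite (bigD1 v) //=.
  lia.
have := IH y' Hk'; rewrite ffunE ys => /(_ erefl) H1.
apply: reach_trans H1 _.
have -> : [ffun u => x u + y u] = add_grain v [ffun u => x u + y' u].
  apply/ffunP => u; rewrite !ffunE.
  case: (eqVneq u v) => [->|uv] /=; last by rewrite subn0 addn0.
  by rewrite addn1 -addnS subn1 prednK.
apply: reach_add vs _; exact: reach_refl.
Qed.

Lemma reach_le (x z : cfg V) : (forall u, x u <= z u) -> x s = z s -> reach e s x z.
Proof.
move=> le xz.
have -> : z = [ffun u => x u + [ffun u => z u - x u] u].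
  by apply/ffunP => u; rewrite !ffunE subnKC.
by apply: reach_addf; rewrite ffunE xz subnn.
Qed.


Definition noFSC (x : cfg V) := forall A : {set V}, s \notin A -> A != set0 ->
  exists2 v, v \in A & #|[set w in A | e v w]| <= x v.

Lemma nbA_lt (A : {set V}) v w : e v w -> w \notin A -> #|[set u in A | e v u]| < deg e v.
Proof.
move=> hvw wA; rewrite /deg [X in _ < X](cardsD1 w) inE hvw add1n ltnS.
apply: subset_leq_card; apply/subsetP => u; rewrite !inE => /andP[uA evu].
rewrite evu andbT; by apply: contraNneq wA => <-.
Qed.

Lemma noFSC_cmax : noFSC (cmax e s).
Proof.
move=> A sA /set0Pn [v vA].
have wit : forall w z, w \in A -> w != s -> e w z -> z \notin A ->
    exists2 v, v \in A & #|[set u in A | e v u]| <= cmax e s v.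
  move=> w z wA ws ewz zA; exists w => //.
  have H := nbA_lt ewz zA.
  by rewrite ffunE (negbTE ws) -ltnS (ltn_predK H).
have vs : v != s by apply: contraNneq sA => <-.
have ms : m != s by apply: contraNneq mcol => ->.
case: (boolP (v \in R)) => vR.
  case: (boolP (m \in A)) => mA.
    by apply: (wit m s) => //; rewrite esym sadj.
  by apply: (wit v m) => //; apply: madj.
by apply: (wit v s) => //; rewrite esym sadj.
Qed.

Lemma noFSC_add v x : noFSC x -> noFSC (add_grain v x).
Proof.
move=> H A sA A0; have [w wA Hw] := H A sA A0; exists w => //.
rewrite ffunE; exact: leq_trans Hw (leq_addr _ _).
Qed.

Lemma noFSC_top v x : unstable e s x v -> noFSC x -> noFSC (topple_set e s [set v] x).
Proof.
move=> /andP[vs dv] H A sA A0.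
case: (boolP (v \in A)) => vA; last first.
  have [w wA Hw] := H A sA A0; exists w => //.
  have ws : w != s by apply: contraNneq sA => <-.
  have wv : w != v by apply: contraNneq vA => <-.
  rewrite toppleE (negbTE ws) in_set1 (negbTE wv) subn0; exact: leq_trans Hw (leq_addr _ _).
case: (eqVneq (A :\ v) set0) => A'0.
  exists v => //.
  suff -> : [set w in A | e v w] = set0 by rewrite cards0.
  apply/setP => w; rewrite !inE; case: (eqVneq w v) => [->|wv]; first by rewrite eirr andbF.
  have : w \notin A :\ v by rewrite A'0 inE.
  by rewrite !inE wv /= => /negbTE ->.
have sA' : s \notin A :\ v by rewrite !inE negb_and sA orbT.
have [w] := H _ sA' A'0; rewrite !inE => /andP[wv wA] Hw.
exists w => //.
have ws : w != s by apply: contraNneq sA => <-.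
rewrite toppleE (negbTE ws) in_set1 (negbTE wv) subn0 card_nb1.
rewrite (cardsD1 v) in_set vA /=.
have -> : [set u in A | e w u] :\ v = [set u in A :\ v | e w u].
  by apply/setP => u; rewrite !inE andbA.
by rewrite (esym w v) addnC leq_add2r.
Qed.

Lemma reach_inv (a b : cfg V) : reach e s a b -> noFSC a -> a s = 0 -> noFSC b /\ b s = 0.
Proof.
elim=> {a b} [a|a b v vs _ IH|a b v vu _ IH] Ha Hs //.
- apply: IH; first exact: noFSC_add.
  by rewrite ffunE Hs eq_sym (negbTE vs).
- apply: IH; first exact: noFSC_top.
  by rewrite toppleE eqxx.
Qed.

Definition st (c : cfg V) k := (canon_aux e s (~: R) c k).2.
Definition blk (c : cfg V) k := canon_top e s (~: R) c k.
Fixpoint Tset (c : cfg V) k : {set V} :=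
  if k is k'.+1 then Tset c k' :|: blk c k'.+1 else [set s].
Arguments st : simpl never.
Arguments blk : simpl never.

Lemma stS c k : st c k.+1 = topple_set e s (blk c k.+1) (st c k). Proof. by []. Qed.
Lemma blkS c k : blk c k.+1 =
  [set v in (if odd k.+1 then ~: R else ~: ~: R) | unstable e s (st c k) v].
Proof. by []. Qed.
Lemma st0 c : st c 0 = topple_set e s [set s] c. Proof. by []. Qed.
Lemma TS c k : Tset c k.+1 = Tset c k :|: blk c k.+1. Proof. by []. Qed.
Lemma T0 c : Tset c 0 = [set s]. Proof. by []. Qed.

Lemma sT c k : s \in Tset c k.
Proof. elim: k => [|k IH]; [by rewrite T0 inE | by rewrite TS inE IH]. Qed.
Lemma Tsub c k : Tset c k \subset Tset c k.+1.
Proof. by rewrite TS subsetUl. Qed.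
Lemma Tmono c i j : i <= j -> Tset c i \subset Tset c j.
Proof.
elim: j => [|j IH]; first by rewrite leqn0 => /eqP ->.
rewrite leq_eqVlt => /orP[/eqP -> //|]; rewrite ltnS => /IH H.
exact: subset_trans H (Tsub _ _).
Qed.

Lemma inv c : stable e s c -> forall k u, u != s ->
  st c k u + (u \in Tset c k) * deg e u = c u + #|[set w in Tset c k | e w u]|.
Proof.
move=> Hc; elim=> [|k IH] u us.
  by rewrite T0 st0 toppleE (negbTE us) in_set1 (negbTE us) subn0 mul0n addn0.
have disj : forall v, v \in blk c k.+1 -> v \notin Tset c k.
  move=> v; rewrite blkS in_set => /andP[_ /andP[vs dv]].
  apply/negP => vT. have := IH v vs; rewrite vT mul1n.
  have := nb_le_deg (Tset c k) v. have := Hc v vs. lia.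
rewrite stS toppleE (negbTE us) TS in_setU.
have -> : [set w in Tset c k :|: blk c k.+1 | e w u] =
    [set w in Tset c k | e w u] :|: [set w in blk c k.+1 | e w u].
  by apply/setP => w; rewrite !inE andb_orl.
rewrite cardsU.
have -> : [set w in Tset c k | e w u] :&: [set w in blk c k.+1 | e w u] = set0.
  apply/setP => w; rewrite in_set0; apply/negbTE/negP.
  move=> /setIP[/setIdP[wT _] /setIdP[wb _]].
  by rewrite (negbTE (disj w wb)) in wT.
rewrite cards0 subn0.
have := IH u us.
case: (boolP (u \in blk c k.+1)) => ub.
  have uT := disj u ub; rewrite (negbTE uT) /= mul0n addn0 mul1n => E.
  move: ub; rewrite blkS in_set => /andP[_ /andP[_ du]].
  lia.
rewrite /= orbF; case: (u \in Tset c k); rewrite ?mul1n ?mul0n => E; lia.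
Qed.


Lemma blk_sub c k : blk c k.+1 \subset Tset c k.+1.
Proof. by rewrite TS subsetUr. Qed.

Lemma stall c : stable e s c -> noFSC c -> forall k, Tset c k = Tset c k.+2 -> Tset c k = setT.
Proof.
move=> Hc Hn k E.
have E1 : Tset c k.+1 = Tset c k.
  apply/eqP; rewrite eqEsubset Tsub andbT E; exact: Tsub.
apply/setP => v; rewrite inE; apply: contraT => vT; suff : False by [].
have sA : s \notin ~: Tset c k by rewrite inE negbK sT.
have A0 : ~: Tset c k != set0 by apply/set0Pn; exists v; rewrite inE.
have [w] := Hn _ sA A0; rewrite inE => wT Hw.
have ws : w != s by apply: contraNneq wT => ->; exact: sT.
have key : forall j, Tset c j = Tset c k -> w \notin blk c j.+1 ->
    w \in (if odd j.+1 then ~: R else ~: ~: R) -> False.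
  move=> j Ej wb wside.
  have := inv Hc j ws; rewrite Ej (negbTE wT) mul0n addn0 => Est.
  move: wb; rewrite blkS in_set wside /= /unstable ws /= -ltnNge => lt.
  have D : deg e w = #|[set x in Tset c k | e x w]| + #|[set x in ~: Tset c k | e w x]|.
    rewrite /deg -(cardsID (Tset c k) [set x | e w x]).
    congr (_ + _); apply: eq_card => x; rewrite !inE ?(esym x w) // andbC //.
  lia.
have nb1 : w \notin blk c k.+1.
  apply: contra wT => wb; rewrite -E1; exact: (subsetP (blk_sub c k)).
have nb2 : w \notin blk c k.+2.
  apply: contra wT => wb; rewrite E; exact: (subsetP (blk_sub c k.+1)).
case: (boolP (w \in R)) => wR; case ok: (odd k).
- by apply: (key k) => //; rewrite oddS ok setCK.
- by apply: (key k.+1) => //; rewrite !oddS ok setCK.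
- by apply: (key k.+1) => //; rewrite !oddS ok inE.
- by apply: (key k) => //; rewrite oddS ok inE.
Qed.

Lemma pig c : stable e s c -> noFSC c -> exists K, Tset c K = setT.
Proof.
move=> Hc Hn.
have H : forall i, (exists2 j, j < i & Tset c (2*j) = Tset c (2*j).+2) \/ i < #|Tset c (2*i)|.
  elim=> [|i IH].
    by right; rewrite card_gt0; apply/set0Pn; exists s; exact: sT.
  case: IH => [[j jm Ej]|IH]; first by left; exists j => //; exact: ltnW.
  case: (eqVneq (Tset c (2*i)) (Tset c (2*i).+2)) => Em; first by left; exists i.
  right; have -> : 2 * i.+1 = (2*i).+2 by lia.
  have sub : Tset c (2*i) \proper Tset c (2*i).+2.
    by rewrite properEneq Em andTb; apply: Tmono; lia.
  have := proper_card sub; lia.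
case: (H #|V|) => [[j _ Ej]|]; first by exists (2*j); exact: stall Ej.
by rewrite ltnNge max_card.
Qed.

Lemma levels c : stable e s c -> noFSC c -> exists lev : V -> nat,
  forall u, u \in Tset c (lev u) /\ forall j, u \in Tset c j -> lev u <= j.
Proof.
move=> Hc Hn; have [K HK] := pig Hc Hn.
have ex : forall u, exists k, u \in Tset c k by move=> u; exists K; rewrite HK inE.
exists (fun u => @ex_minn (fun k => u \in Tset c k) (ex u)) => u.
by case: ex_minnP.
Qed.

Lemma lowb c lev : stable e s c ->
  (forall u, u \in Tset c (lev u) /\ forall j, u \in Tset c j -> lev u <= j) ->
  forall u, u != s -> 0 < lev u /\ deg e u <= c u + #|[set w in Tset c (lev u).-1 | e w u]|.
Proof.
move=> Hc Hl u us; have [uT umin] := Hl u.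
case E: (lev u) => [|j].
  by move: uT; rewrite E T0 in_set1 (negbTE us).
split => //.
have ujT : u \notin Tset c j by apply/negP => /umin; rewrite E ltnn.
have ub : u \in blk c j.+1 by move: uT; rewrite E TS in_setU (negbTE ujT).
move: ub; rewrite blkS in_set => /andP[_ /andP[_ du]].
have := inv Hc j us; rewrite (negbTE ujT) mul0n addn0 /= => <-; exact du.
Qed.


Definition beta : cfg V := [ffun u => (e s u : nat)].

Lemma card_seq (P : seq V) (p : pred V) : uniq P -> #|[set w | (w \in P) && p w]| = count p P.
Proof.
move=> uP; rewrite -size_filter.
have /card_uniqP <- := filter_uniq p uP.
by apply: eq_card => w; rewrite inE mem_filter andbC.
Qed.

Section Burn.
Variables (d : cfg V) (T : nat -> {set V}) (lev : V -> nat).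
Hypothesis ds : d s = 0.
Hypothesis Tlev : forall u w, u != s -> w != s -> w \in T (lev u).-1 -> lev w < lev u.
Hypothesis dlow : forall u, u != s -> deg e u <= d u + #|[set w in T (lev u).-1 | e w u]|.

Let l := sort (fun a b => lev a <= lev b) (enum [set~ s]).
Let l_uniq : uniq l. Proof. by rewrite sort_uniq enum_uniq. Qed.
Let l_mem w : (w \in l) = (w != s). Proof. by rewrite mem_sort mem_enum !inE. Qed.

Let burn_legal (y : cfg V) : legalP l [ffun u => d u + beta u + y u].
Proof.
move=> P1 v P2 E.
have vl : v \in l by rewrite E mem_cat in_cons eqxx orbT.
have vs : v != s by rewrite -l_mem.
have srt : sorted (fun a b => lev a <= lev b) l.
  by apply: sort_sorted => a b; exact: leq_total.
have P2ge : forall w, w \in P2 -> lev v <= lev w.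
  move: srt; rewrite E sorted_cat_cons => /andP[_ pth] w wP2.
  have := order_path_min (leT := fun a b => lev a <= lev b) _ pth.
  move=> /(_ (fun y0 x0 z0 => @leq_trans (lev y0) (lev x0) (lev z0))) /allP; exact.
have uP1 : uniq P1 by move: l_uniq; rewrite E cat_uniq => /andP[].
have bnd : #|[set w in T (lev v).-1 | e w v]| <= beta v + count (fun w => e w v) P1.
  rewrite ffunE -card_seq // -card_nb1.
  apply: (@leq_trans #|[set w in [set s] | e w v] :|: [set w | (w \in P1) && e w v]|); last first.
    by rewrite cardsU leq_subr.
  apply: subset_leq_card; apply/subsetP => w; rewrite !inE => /andP[wT ewv].
  rewrite ewv andbT; case: (eqVneq w s) => //= ws.
  rewrite andbT.
  have lt := Tlev vs ws wT.
  have wl : w \in l by rewrite l_mem.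
  move: wl; rewrite E mem_cat in_cons; case/orP => [//|]; case/orP => [/eqP wv|wP2].
    by move: lt; rewrite wv ltnn.
  by have := P2ge _ wP2; rewrite leqNgt lt.
have := dlow vs; rewrite !ffunE.
move: bnd; rewrite ffunE; lia.
Qed.

Let burn (y : cfg V) : y s = 0 ->
  reach e s [ffun u => d u + beta u + y u] [ffun u => d u + y u].
Proof.
move=> ys.
have sl : s \notin l by rewrite l_mem eqxx.
suff <- : tops l [ffun u => d u + beta u + y u] = [ffun u => d u + y u].
  exact: tops_reach l_uniq sl (burn_legal y).
apply/ffunP => u; rewrite [RHS]ffunE.
case: (eqVneq u s) => [->|us].
  by rewrite tops_sink ?ds ?ys // !ffunE ds ys eirr.
have := tops_val l_uniq sl (burn_legal y) us.
rewrite l_mem us mul1n !ffunE.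
have cnt : count (fun w => e w u) l + e s u = deg e u.
  rewrite -card_seq // /deg (cardsD1 s [set w | e u w]) in_set (esym u s) addnC.
  congr (_ + _); apply: eq_card => w; rewrite !inE l_mem (esym w u).
  done.
move: cnt; case: (e s u) => /=; lia.
Qed.

Let burnk k : reach e s [ffun u => d u + k * beta u] d.
Proof.
elim: k => [|k IH].
  have -> : [ffun u => d u + 0 * beta u] = d by apply/ffunP => u; rewrite ffunE mul0n addn0.
  exact: reach_refl.
apply: reach_trans IH.
have := @burn [ffun u => k * beta u].
have -> : [ffun u => d u + beta u + [ffun u => k * beta u] u] = [ffun u => d u + k.+1 * beta u].
  by apply/ffunP => u; rewrite !ffunE mulSn addnA.
have -> : [ffun u => d u + [ffun u => k * beta u] u] = [ffun u => d u + k * beta u].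
  by apply/ffunP => u; rewrite !ffunE.
apply; by rewrite !ffunE eirr muln0.
Qed.

Lemma rec_d : reach e s (cmax e s) d.
Proof.
pose lr := enum (R :\ s).
pose K := 2 * #|V|.
pose a : cfg V := [ffun u => if u == s then 0 else if u \in R then d u + deg e u
                   else d u + K - count (fun w => e w u) lr].
have ulr : uniq lr := enum_uniq _.
have lrmem : forall w, (w \in lr) = (w != s) && (w \in R) by move=> w; rewrite mem_enum !inE.
have slr : s \notin lr by rewrite lrmem eqxx.
have cntle : forall u, count (fun w => e w u) lr <= #|V|.
  move=> u; apply: leq_trans (count_size _ _) _; rewrite -cardE; exact: max_card.
have degle : forall u, deg e u <= #|V| by move=> u; exact: max_card.
have leg : legalP lr a.
  move=> P1 v P2 E; have : v \in lr by rewrite E mem_cat in_cons eqxx orbT.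
  rewrite lrmem => /andP[vs vR]; rewrite ffunE (negbTE vs) vR; lia.
have row : tops lr a = [ffun u => d u + K * beta u].
  apply/ffunP => u; rewrite [RHS]ffunE.
  case: (eqVneq u s) => [->|us].
    by rewrite tops_sink ?ds /beta ?ffunE ?eirr ?muln0 ?eqxx.
  have := tops_val ulr slr leg us; rewrite lrmem us /= /beta !ffunE (negbTE us) (sadj us).
  case: (boolP (u \in R)) => uR /=.
    have -> : count (fun w => e w u) lr = 0.
      apply/eqP; rewrite -leqn0 leqNgt -has_count; apply/hasPn => w.
      rewrite lrmem => /andP[_ wR]; apply/negP => /bip; rewrite wR uR //.
    rewrite mul1n muln0; lia.
  have := cntle u; rewrite mul0n muln1; lia.
apply: (@reach_trans _ a).
  apply: reach_le; last by rewrite !ffunE eqxx.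
  move=> u; rewrite !ffunE; case: (u == s) => //.
  by case: (u \in R); have := cntle u; have := degle u; lia.
apply: reach_trans (tops_reach ulr slr leg) _; rewrite row; exact: burnk.
Qed.

End Burn.

Lemma tot_eq (c d : cfg V) : (forall u, d u <= c u) -> Defs.total c <= Defs.total d -> c = d.
Proof.
move=> le tl; apply/ffunP => u.
move: tl; rewrite /Defs.total (bigD1 u) //= [X in _ <= X](bigD1 u) //=.
have : \sum_(i | i != u) d i <= \sum_(i | i != u) c i by apply: leq_sum => i _; exact: le.
have := le u; lia.
Qed.

Theorem main_gen (c c' : cfg V) : rec_min e s c -> rec_min e s c' ->
  (forall k, canon_top e s (~: R) c k = canon_top e s (~: R) c' k) -> c = c'.
Proof.
move=> [[Hc Hrc] Mc] [[Hc' Hrc'] Mc'] Hk.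
have cm0 : cmax e s s = 0 by rewrite ffunE eqxx.
have [nc cs] := reach_inv Hrc noFSC_cmax cm0.
have [nc' cs'] := reach_inv Hrc' noFSC_cmax cm0.
have TT : forall j, Tset c' j = Tset c j.
  by elim=> [|j IH] //; rewrite !TS IH /blk Hk.
have [lev Hl] := levels Hc nc.
have Hl' : forall u, u \in Tset c' (lev u) /\ (forall j, u \in Tset c' j -> lev u <= j).
  move=> u; have [h1 h2] := Hl u; split; first by rewrite TT.
  by move=> j; rewrite TT; exact: h2.
pose d : cfg V := [ffun u => minn (c u) (c' u)].
have dlow : forall u, u != s -> deg e u <= d u + #|[set w in Tset c (lev u).-1 | e w u]|.
  move=> u us; have [_ h1] := lowb Hc Hl us; have [_ h2] := lowb Hc' Hl' us.
  by rewrite TT in h2; rewrite ffunE addn_minl leq_min h1 h2.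
have Tl : forall u w, u != s -> w != s -> w \in Tset c (lev u).-1 -> lev w < lev u.
  move=> u w us ws wT; have [p _] := lowb Hc Hl us; have [_ mn] := Hl w.
  have := mn _ wT; lia.
have ds : d s = 0 by rewrite ffunE cs cs'.
have rd : recurrent e s d.
  split; last exact: rec_d ds Tl dlow.
  move=> u us; rewrite ffunE; exact: leq_ltn_trans (geq_minl _ _) (Hc u us).
have dc : forall u, d u <= c u by move=> u; rewrite ffunE geq_minl.
have dc' : forall u, d u <= c' u by move=> u; rewrite ffunE geq_minr.
have E1 := tot_eq dc (Mc d rd).
have E2 := tot_eq dc' (Mc' d rd).
by rewrite E1 E2.
Qed.

End Gen.

Theorem theorem3p6 (n : nat) (R : {set 'I_n.+1}) (hF : is_ferrers R)
  (c c' : {ffun 'I_n.+1 -> nat}) :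
  rec_min (ferrers_rel R) ord0 c ->
  rec_min (ferrers_rel R) ord0 c' ->
  ((forall k, canon_top (ferrers_rel R) ord0 (~: R) c k
              = canon_top (ferrers_rel R) ord0 (~: R) c' k)
   <-> c = c').
Proof.
move=> Hc Hc'; split; last by move=> -> k.
case: hF => h0 hm.
have esym : symmetric (ferrers_rel R) by move=> i j; rewrite /ferrers_rel orbC.
have eirr : irreflexive (ferrers_rel R) by move=> i; rewrite /ferrers_rel ltnn !andbF.
have bip : forall u w, ferrers_rel R u w -> (u \in R) = (w \notin R).
  by move=> u w; rewrite /ferrers_rel; case: (u \in R); case: (w \in R); rewrite /= ?andbF.
have sadj : forall u, u != ord0 -> ferrers_rel R ord0 u = (u \notin R).
  move=> u u0; rewrite /ferrers_rel h0 /= andbF orbF.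
  have u0' : (u : nat) != 0 by apply: contraNneq u0 => h; apply/eqP/val_inj.
  by rewrite lt0n u0' andbT.
have madj : forall u, u \in R -> ferrers_rel R u ord_max.
  move=> u uR; rewrite /ferrers_rel uR hm /=.
  have un : (u : nat) != n.
    by apply: contraNneq hm => h; have <- : u = ord_max by apply/val_inj. 
  by rewrite ltn_neqAle un -ltnS ltn_ord.
exact: (main_gen esym eirr bip h0 sadj hm madj Hc Hc').
Qed.
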